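(* Let $N\geq 1$ and let $K$ be an $N\times N$ real matrix with non-negative entries which is diagonally symmetrizable, i.e. $K=D\cdot S$ for some diagonal matrix $D$ with positive diagonal entries and some symmetric real matrix $S$. Let $R_0=\rho(K)$ be the spectral radius of $K$ and define $R_e:[0,1]^N\to\mathbb{R}_+$ by $R_e(\eta)=\rho\big(K\cdot \mathrm{Diag}(\eta)\big)$, where $\mathrm{Diag}(\eta)$ is the diagonal matrix with diagonal entries $\eta_1,\dots,\eta_N$. (i) If every eigenvalue of $K$ is a non-negative real number, then $R_e$ is convex on $[0,1]^N$. (ii) If $R_0$ is a simple eigenvalue of $K$ and every eigenvalue of $K$ belongs to $(-\infty,0]\cup\{R_0\}$, then $R_e$ is concave on $[0,1]^N$.
   Context: $\rho(A)$ denotes the spectral radius of a square matrix $A$ (maximum modulus of its eigenvalues). An eigenvalue is simple if its algebraic multiplicity is $1$. *)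

(* Defs.v *)
From mathcomp Require Import all_boot all_order all_algebra.
From mathcomp Require Import classical_sets reals.
From mathcomp.real_closed Require Import complex.
Set Implicit Arguments. Unset Strict Implicit. Unset Printing Implicit Defensive.
Import Order.TTheory GRing.Theory Num.Theory.
Local Open Scope ring_scope.
Local Open Scope classical_set_scope.

Definition cmod (R : rcfType) (z : R[i]) : R :=
  Num.sqrt (complex.Re z ^+ 2 + complex.Im z ^+ 2).

Definition cplx_mx (R : rcfType) (n : nat) (A : 'M[R]_n) : 'M[R[i]]_n :=
  map_mx (real_complex R) A.

Definition eigenvalues (R : rcfType) (n : nat) (A : 'M[R]_n) : set R[i] :=
  [set z | root (char_poly (cplx_mx A)) z].

Definition alg_mult (R : rcfType) (n : nat) (A : 'M[R]_n) (z : R[i]) : nat :=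
  mup z (char_poly (cplx_mx A)).

(* spectral radius: maximum modulus of the eigenvalues (a finite nonempty set
   when n >= 1, so the supremum is a maximum) *)
Definition spectral_radius (R : realType) (n : nat) (A : 'M[R]_n) : R :=
  sup [set cmod z | z in eigenvalues A].

Definition diag_symmetrizable (R : realType) (n : nat) (K : 'M[R]_n) : Prop :=
  exists (d : 'rV[R]_n) (S : 'M[R]_n),
    (forall i, 0 < d 0 i) /\ S^T = S /\ K = diag_mx d *m S.

Definition in_unit_cube (R : realType) (n : nat) (eta : 'rV[R]_n) : Prop :=
  forall i, 0 <= eta 0 i <= 1.

Definition Re_fun (R : realType) (n : nat) (K : 'M[R]_n) (eta : 'rV[R]_n) : R :=
  spectral_radius (K *m diag_mx eta).

Definition convex_on_cube (R : realType) (n : nat) (f : 'rV[R]_n -> R) : Prop :=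
  forall (x y : 'rV[R]_n) (t : R), in_unit_cube x -> in_unit_cube y ->
    0 <= t <= 1 -> f (t *: x + (1 - t) *: y) <= t * f x + (1 - t) * f y.

Definition concave_on_cube (R : realType) (n : nat) (f : 'rV[R]_n -> R) : Prop :=
  forall (x y : 'rV[R]_n) (t : R), in_unit_cube x -> in_unit_cube y ->
    0 <= t <= 1 -> t * f x + (1 - t) * f y <= f (t *: x + (1 - t) *: y).

(* Main.v *)
Require Import Defs.
From mathcomp Require Import all_boot all_order all_algebra.
From mathcomp Require Import classical_sets reals.
From mathcomp.real_closed Require Import complex.
From mathcomp Require Import spectral sesquilinear.
From mathcomp Require Import ring lra.
Import Order.TTheory GRing.Theory Num.Theory Num.Def.
Local Open Scope ring_scope.
Set Implicit Arguments. Unset Strict Implicit. Unset Printing Implicit Defensive.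


Lemma transfer1 (F : fieldType) n (H E S : 'M[F]_n) (z : F) :
  H \in unitmx -> H *m E = E *m H -> z != 0 ->
  eigenvalue (H *m H *m S *m (E *m E)) z -> eigenvalue (E *m H *m S *m H *m E) z.
Proof.
move=> Hu HE z0 /eigenvalueP [v Hv v0]; apply/eigenvalueP.
have HEE : H *m (E *m E) = E *m E *m H by rewrite mulmxA HE -!mulmxA HE.
have key : v *m H *m H *m S *m H *m (E *m E) = z *: (v *m H).
  rewrite -[_ *m H *m (E *m E)]mulmxA HEE !mulmxA.
  by move: Hv; rewrite !mulmxA => ->; rewrite scalemxAl.
exists (v *m H *m H *m S *m H *m E).
  have -> : v *m H *m H *m S *m H *m E *m (E *m H *m S *m H *m E)
     = (v *m H *m H *m S *m H *m (E *m E)) *m H *m S *m H *m E by rewrite !mulmxA.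
  by rewrite key -!scalemxAl.
apply: contra_neq v0 => u0.
have : v *m H *m H *m S *m H *m E *m E = 0 by rewrite u0 mul0mx.
rewrite -mulmxA key => /eqP; rewrite scaler_eq0 (negbTE z0) /= => /eqP.
by move/(congr1 (mulmx^~ (invmx H))); rewrite mulmxK // mul0mx.
Qed.

Lemma transfer2 (F : fieldType) n (H E S : 'M[F]_n) (z : F) :
  H \in unitmx -> H *m E = E *m H -> z != 0 ->
  eigenvalue (E *m H *m S *m H *m E) z -> eigenvalue (H *m H *m S *m (E *m E)) z.
Proof.
move=> Hu HE z0 /eigenvalueP [u Hu' u0]; apply/eigenvalueP.
have HEE : H *m (E *m E) = E *m E *m H by rewrite mulmxA HE -!mulmxA HE.
exists (u *m E *m invmx H).
  have -> : u *m E *m invmx H *m (H *m H *m S *m (E *m E)) = u *m E *m H *m S *m (E *m E).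
    by rewrite !mulmxA mulmxKV.
  have : u *m (E *m H *m S *m H *m E) *m E *m invmx H = z *: (u *m E *m invmx H).
    by rewrite Hu' -!scalemxAl.
  move=> <-; rewrite !mulmxA -[_ *m H *m E *m E]mulmxA -[_ *m H *m (E *m E)]mulmxA HEE.
  by rewrite !mulmxA mulmxK.
apply: contra_neq u0 => v0.
have uE0 : u *m E = 0.
  by move/(congr1 (mulmx^~ H)): v0; rewrite mulmxKV // mul0mx.
have : u *m (E *m H *m S *m H *m E) = 0 by rewrite !mulmxA uE0 !mul0mx.
by rewrite Hu' => /eqP; rewrite scaler_eq0 (negbTE z0) /= => /eqP.
Qed.

Lemma char_poly_sim (F : fieldType) n (H M : 'M[F]_n) :
  H \in unitmx -> char_poly (H *m M *m invmx H) = char_poly M.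
Proof.
move=> Hu; rewrite /char_poly /char_poly_mx.
have -> : 'X%:M - map_mx polyC (H *m M *m invmx H) =
   map_mx polyC H *m ('X%:M - map_mx polyC M) *m map_mx polyC (invmx H).
  rewrite mulmxBr mulmxBl !map_mxM -!mulmxA.
  rewrite mul_scalar_mx -scalemxAr.
  have -> : map_mx polyC H *m map_mx polyC (invmx H) = 1%:M by rewrite -map_mxM mulmxV // map_mx1.
  by rewrite scalemx1.
rewrite !det_mulmx !det_map_mx mulrAC -rmorphM /= -det_mulmx mulmxV //.
by rewrite det1 mul1r.
Qed.


Section BF.
Variable R : realFieldType.

Definition bf n (M : 'M[R]_n) (a b : 'rV[R]_n) : R := (a *m M *m b^T) 0 0.

Lemma bf_sym n (M : 'M[R]_n) a b : M^T = M -> bf M a b = bf M b a.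
Proof.
move=> Ms; rewrite /bf.
have -> : (a *m M *m b^T) 0 0 = ((a *m M *m b^T)^T) 0 0 by rewrite [RHS]mxE.
by rewrite !trmx_mul trmxK Ms mulmxA.
Qed.

Lemma bf_linl n (M : 'M[R]_n) p q u v w :
  bf M (p *: u + q *: v) w = p * bf M u w + q * bf M v w.
Proof. by rewrite /bf !mulmxDl -!scalemxAl !mxE. Qed.

Lemma bf_linr n (M : 'M[R]_n) p q u v w :
  bf M w (p *: u + q *: v) = p * bf M w u + q * bf M w v.
Proof. by rewrite /bf linearD /= !linearZ /= mulmxDr -!scalemxAr !mxE. Qed.

Lemma quad2 n (M : 'M[R]_n) p q u v : M^T = M ->
  bf M (p *: u + q *: v) (p *: u + q *: v) =
  p ^+ 2 * bf M u u + 2 * p * q * bf M u v + q ^+ 2 * bf M v v.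
Proof.
move=> Ms; rewrite bf_linl !bf_linr (bf_sym _ _ Ms); ring.
Qed.

Lemma discr (A B C : R) : 0 <= C -> (forall s, 0 <= A + 2 * s * B + s ^+ 2 * C) ->
  B ^+ 2 <= A * C.
Proof.
move=> C0 H; have [Cz|Cp] := eqVneq C 0.
  have [Bz|Bn] := eqVneq B 0; first by rewrite Bz Cz expr0n mulr0.
  have := H (- (A + 1) / (2 * B)).
  have -> : 2 * (- (A + 1) / (2 * B)) * B = - (A + 1).
    by field.
  by rewrite Cz mulr0 addr0; lra.
have Cpos : 0 < C by rewrite lt_def Cp.
pose s := - B / C.
have sC : s * C = - B by rewrite /s divfK.
have := H s; rewrite -(ler_pM2r Cpos) mul0r => h.
nra.
Qed.

Lemma cs_psd n (M : 'M[R]_n) a b : M^T = M -> (forall v, 0 <= bf M v v) ->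
  bf M a b ^+ 2 <= bf M a a * bf M b b.
Proof.
move=> Ms H; apply: discr => // s.
by have := H (1 *: a + s *: b); rewrite quad2 // expr1n mul1r mulr1.
Qed.

End BF.


Lemma crd0 (R : realFieldType) (t a b p q G : R) : 0 <= t -> t <= 1 -> 0 <= p -> 0 <= q ->
  G ^+ 2 = t * p ^+ 2 + (1 - t) * q ^+ 2 -> G = 0 -> t * (a * p) + (1 - t) * (b * q) = 0.
Proof.
move=> t0 t1 p0 q0 HG G0; rewrite G0 expr0n /= in HG.
have h1 : t * p ^+ 2 = 0 by nra.
have h2 : (1 - t) * q ^+ 2 = 0 by nra.
have e1 : (t * p) ^+ 2 = t * (t * p ^+ 2) by ring.
rewrite h1 mulr0 in e1.
have e2 : ((1 - t) * q) ^+ 2 = (1 - t) * ((1 - t) * q ^+ 2) by ring.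
rewrite h2 mulr0 in e2.
move/eqP: e1; rewrite sqrf_eq0 => /eqP e1.
move/eqP: e2; rewrite sqrf_eq0 => /eqP e2.
have -> : t * (a * p) = a * (t * p) by ring.
have -> : (1 - t) * (b * q) = b * ((1 - t) * q) by ring.
by rewrite e1 e2 !mulr0 addr0.
Qed.

Lemma crd1 (R : realFieldType) (t a b p q G : R) : 0 <= t -> t <= 1 -> 0 <= G ->
  G ^+ 2 = t * p ^+ 2 + (1 - t) * q ^+ 2 ->
  ((t * (a * p) + (1 - t) * (b * q)) / G) ^+ 2 <= t * a ^+ 2 + (1 - t) * b ^+ 2.
Proof.
move=> t0 t1 G0 HG.
have rhs0 : 0 <= t * a ^+ 2 + (1 - t) * b ^+ 2.
  by apply: addr_ge0; apply: mulr_ge0; rewrite ?sqr_ge0 //; lra.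
have [->|Gn] := eqVneq G 0; first by rewrite invr0 mulr0 expr0n.
have Gp : 0 < G ^+ 2 by rewrite exprn_gt0 // lt_def Gn.
rewrite expr_div_n ler_pdivrMr // HG.
have : 0 <= t * (1 - t) * (a * q - b * p) ^+ 2 by rewrite mulr_ge0 ?sqr_ge0 //; nra.
move=> h; nra.
Qed.


Section S.
Variable R : realType.
Local Notation C := (R[i]).
Local Notation toC := (real_complex R).

Lemma conjC_toC (x : R) : (toC x)^* = toC x.
Proof. by rewrite conj_Creal //; apply/complex_realP; exists x. Qed.

Definition adj n (z : 'rV[C]_n) : 'cV[C]_n := map_mx conjC z^T.
Definition rC n (x : 'rV[R]_n) : 'rV[C]_n := map_mx toC x.
Definition hP n (P : 'M[C]_n) : 'M[C]_n := map_mx conjC P^T.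

Lemma adj_rC n (x : 'rV[R]_n) : adj (rC x) = map_mx toC x^T.
Proof. by apply/matrixP => i j; rewrite !mxE conjC_toC. Qed.

Lemma qC_rC n (M : 'M[R]_n) (x : 'rV[R]_n) :
  rC x *m cplx_mx M *m adj (rC x) = map_mx toC (x *m M *m x^T).
Proof. by rewrite adj_rC /rC /cplx_mx !map_mxM. Qed.

Lemma adj_mul n (z : 'rV[C]_n) (P : 'M[C]_n) : adj (z *m hP P) = P *m adj z.
Proof.
rewrite /adj /hP trmx_mul map_mxM; congr (_ *m _).
by apply/matrixP => i j; rewrite !mxE; exact: conjCK.
Qed.

Lemma spec_real n (T : 'M[R]_n) : T^T = T ->
  exists (P : 'M[C]_n) (d : 'rV[R]_n),
   P *m hP P = 1%:M /\ cplx_mx T = hP P *m diag_mx (map_mx toC d) *m P.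
Proof.
move=> Tsym.
have Treal : cplx_mx T \is a realmx.
  apply/mxOverP => i j; rewrite /cplx_mx mxE.
  by apply/complex_realP; exists (T i j).
have Tsy : cplx_mx T \is symmetricmx.
  apply/is_hermitianmxP; rewrite expr0 scale1r map_mx_id // /cplx_mx.
  by rewrite map_trmx Tsym.
have Th := realsym_hermsym Tsy Treal.
have /orthomx_spectralP Te := hermitian_normalmx Th.
have dr := hermitian_spectral_diag_real Th.
exists (spectralmx (cplx_mx T)), (map_mx (@complex.Re R) (spectral_diag (cplx_mx T))).
split.
  by have /unitarymxP := spectral_unitarymx (cplx_mx T).
rewrite /hP -invmx_unitary ?spectral_unitarymx //.
rewrite {1}Te; congr (_ *m _ *m _); congr diag_mx.
apply/matrixP => i j; rewrite !mxE RRe_real //.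
exact: (mxOverP dr).
Qed.

Lemma spec_sum n (T : 'M[R]_n) (P : 'M[C]_n) (d : 'rV[R]_n) (z : 'rV[C]_n) :
  cplx_mx T = hP P *m diag_mx (map_mx toC d) *m P ->
  (z *m cplx_mx T *m adj z) 0 0 =
   \sum_j toC (d 0 j) * ((z *m hP P) 0 j * ((z *m hP P) 0 j)^*).
Proof.
move=> ->; rewrite -!mulmxA -adj_mul !mulmxA mxE.
apply: eq_bigr => j _; rewrite mul_mx_diag !mxE.
by rewrite mulrAC mulrC.
Qed.

Lemma norm_sum n (P : 'M[C]_n) (z : 'rV[C]_n) : P *m hP P = 1%:M ->
  (z *m adj z) 0 0 = \sum_j ((z *m hP P) 0 j * ((z *m hP P) 0 j)^*).
Proof.
move=> PP; have PP' := mulmx1C PP.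
have -> : z *m adj z = (z *m hP P) *m adj (z *m hP P).
  by rewrite adj_mul mulmxA -(mulmxA z) PP' mulmx1.
by rewrite mxE; apply: eq_bigr => j _; rewrite !mxE.
Qed.


Lemma ray_ub n (T : 'M[R]_n) P (d : 'rV[R]_n) lam :
  P *m hP P = 1%:M -> cplx_mx T = hP P *m diag_mx (map_mx toC d) *m P ->
  (forall j, d 0 j <= lam) ->
  forall x : 'rV[R]_n, (x *m T *m x^T) 0 0 <= lam * (x *m x^T) 0 0.
Proof.
move=> PP Te hd x.
rewrite -lecR rmorphM /=.
have e1 : toC ((x *m T *m x^T) 0 0) = (rC x *m cplx_mx T *m adj (rC x)) 0 0.
  by rewrite qC_rC [RHS]mxE.
have e2 : toC ((x *m x^T) 0 0) = (rC x *m adj (rC x)) 0 0.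
  by rewrite adj_rC /rC -map_mxM [RHS]mxE.
rewrite e1 e2 (spec_sum _ Te) (norm_sum _ PP) mulr_sumr.
apply: ler_sum => j _; apply: ler_wpM2r; first exact: mul_conjC_ge0.
by rewrite lecR.
Qed.


Lemma ReD (x y : C) : complex.Re (x + y) = complex.Re x + complex.Re y.
Proof. by case: x; case: y. Qed.
Lemma ImD (x y : C) : complex.Im (x + y) = complex.Im x + complex.Im y.
Proof. by case: x; case: y. Qed.

Lemma Re_sum n (F : 'I_n -> C) : complex.Re (\sum_i F i) = \sum_i complex.Re (F i).
Proof. by elim/big_rec2: _ => // i a b _ <-; rewrite ReD. Qed.
Lemma Im_sum n (F : 'I_n -> C) : complex.Im (\sum_i F i) = \sum_i complex.Im (F i).
Proof. by elim/big_rec2: _ => // i a b _ <-; rewrite ImD. Qed.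

Lemma ReM_toC (w : C) t : complex.Re (w * toC t) = complex.Re w * t.
Proof. by case: w => a b /=; rewrite mulr0 subr0. Qed.
Lemma ImM_toC (w : C) t : complex.Im (w * toC t) = complex.Im w * t.
Proof. by case: w => a b /=; rewrite mulr0 add0r. Qed.

Lemma eig_real n (T : 'M[R]_n) (w : 'rV[C]_n) lam : w != 0 ->
  w *m cplx_mx T = toC lam *: w -> exists2 x : 'rV[R]_n, x != 0 & x *m T = lam *: x.
Proof.
move=> w0 H.
have hRe : map_mx (@complex.Re R) w *m T = lam *: map_mx (@complex.Re R) w.
  apply/matrixP => i j; move/matrixP/(_ i j): H; rewrite !mxE => /(congr1 (@complex.Re R)).
  rewrite Re_sum mulrC ReM_toC mulrC => <-; apply: eq_bigr => k _.
  by rewrite !mxE ReM_toC.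
have hIm : map_mx (@complex.Im R) w *m T = lam *: map_mx (@complex.Im R) w.
  apply/matrixP => i j; move/matrixP/(_ i j): H; rewrite !mxE => /(congr1 (@complex.Im R)).
  rewrite Im_sum mulrC ImM_toC mulrC => <-; apply: eq_bigr => k _.
  by rewrite !mxE ImM_toC.
have [Re0|ReN0] := eqVneq (map_mx (@complex.Re R) w) 0; last by exists (map_mx (@complex.Re R) w).
have [Im0|ImN0] := eqVneq (map_mx (@complex.Im R) w) 0; last by exists (map_mx (@complex.Im R) w).
case/eqP: w0; apply/matrixP => i j.
move/matrixP/(_ i j): Re0; move/matrixP/(_ i j): Im0; rewrite !mxE.
by case: (w i j) => a b /= -> ->.
Qed.


Lemma toC_cmod (c : C) : toC (cmod c) = `|c|.
Proof. by rewrite normc_def. Qed.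

Lemma eig_bound n (T : 'M[R]_n) lam : (forall i j, 0 <= T i j) ->
  (forall x : 'rV[R]_n, (x *m T *m x^T) 0 0 <= lam * (x *m x^T) 0 0) ->
  forall z : C, root (char_poly (cplx_mx T)) z -> cmod z <= lam.
Proof.
move=> T0 hR z; rewrite -eigenvalue_root_char => /eigenvalueP [u Hu u0].
pose a : 'rV[R]_n := \row_i cmod (u 0 i).
have ea : map_mx toC a = \row_i `|u 0 i| by apply/matrixP => i j; rewrite !mxE toC_cmod.
pose s := (u *m adj u) 0 0.
have es : s = toC ((a *m a^T) 0 0).
  rewrite /s !mxE rmorph_sum /=; apply: eq_bigr => i _.
  by rewrite !mxE rmorphM /= !toC_cmod -normCK expr2.
have s0 : 0 < s.
  rewrite lt0r; apply/andP; split; last first.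
    rewrite es ler0c mxE; apply: sumr_ge0 => i _; rewrite !mxE.
    by rewrite mulr_ge0 // sqrtr_ge0.
  apply: contra u0 => /eqP; rewrite /s mxE => Hs.
  have pos : forall i : 'I_n, true -> 0 <= u 0 i * adj u i 0.
    by move=> i _; rewrite !mxE; exact: mul_conjC_ge0.
  have H := psumr_eq0P pos Hs.
  apply/eqP/matrixP => i j; rewrite (ord1 i) mxE.
  have /eqP := H j isT; rewrite !mxE.
  by rewrite mul_conjC_eq0 => /eqP.
have e1 : (u *m cplx_mx T *m adj u) 0 0 = z * s by rewrite Hu -scalemxAl mxE.
have le1 : `|(u *m cplx_mx T *m adj u) 0 0| <= toC ((a *m T *m a^T) 0 0).
  rewrite !mxE rmorph_sum /=; apply: le_trans (ler_norm_sum _ _ _) _.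
  apply: ler_sum => j _; rewrite normrM !mxE rmorphM /= toC_cmod norm_conjC.
  apply: ler_wpM2r => //; rewrite rmorph_sum /=; apply: le_trans (ler_norm_sum _ _ _) _.
  apply: ler_sum => i _; rewrite normrM !mxE rmorphM /= toC_cmod; apply: ler_wpM2l => //.
  by rewrite ger0_norm // ler0c.
have le2 : toC ((a *m T *m a^T) 0 0) <= toC lam * s by rewrite es -rmorphM /= lecR.
move: (le_trans le1 le2); rewrite e1 normrM (ger0_norm (ltW s0)) ler_pM2r //.
by rewrite -toC_cmod lecR.
Qed.


Lemma delta_quad n (A : 'M[R]_n) (j : 'I_n) : ((delta_mx 0 j : 'rV[R]_n) *m A *m (delta_mx 0 j : 'rV[R]_n)^T) 0 0 = A j j.
Proof. by rewrite -rowE trmx_delta -colE !mxE. Qed.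

Lemma rayleigh n (T : 'M[R]_n) : (0 < n)%N -> T^T = T -> (forall i j, 0 <= T i j) ->
  exists lam : R, [/\ 0 <= lam,
    (forall x : 'rV[R]_n, (x *m T *m x^T) 0 0 <= lam * (x *m x^T) 0 0),
    (exists2 x : 'rV[R]_n, x != 0 & x *m T = lam *: x) &
    (forall z : C, root (char_poly (cplx_mx T)) z -> cmod z <= lam) ].
Proof.
move=> n0 Tsym T0.
have [P [d [PP Te]]] := spec_real Tsym.
pose i0 : 'I_n := Ordinal n0.
pose j0 := Order.arg_max i0 xpredT (fun j => d 0 j).
have hd : forall j, d 0 j <= d 0 j0.
  by rewrite /j0; case: (arg_maxP (fun j => d 0 j) (erefl true : xpredT i0)) => // j _ H k; apply: H.
have R1 := ray_ub PP Te hd.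
exists (d 0 j0); split => //.
  have e1 := delta_quad 1%:M j0; rewrite mulmx1 [1%:M j0 j0]mxE eqxx /= in e1.
  have := R1 (delta_mx 0 j0); rewrite delta_quad e1.
  by rewrite mulr1 => /(le_trans (T0 j0 j0)).
- apply: (@eig_real _ _ (row j0 P)).
    apply/eqP => r0.
    have : row j0 (P *m hP P) = 0 by rewrite row_mul r0 mul0mx.
    rewrite PP => /matrixP /(_ 0 j0); rewrite !mxE eqxx /= => /eqP.
    by rewrite oner_eq0.
  have -> : row j0 P *m cplx_mx T = row j0 (P *m cplx_mx T) by rewrite row_mul.
  have -> : P *m cplx_mx T = diag_mx (map_mx toC d) *m P by rewrite Te !mulmxA PP mul1mx.
  by apply/matrixP => i j; rewrite mul_diag_mx !mxE.
- exact: eig_bound.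
Qed.

End S.


Section SP.
Variable R : realType.
Local Notation C := (R[i]).
Local Notation toC := (real_complex R).

Lemma Re_mulconj (w y : C) : complex.Re (w * y^*) = complex.Re w * complex.Re y + complex.Im w * complex.Im y.
Proof. by case: w; case: y => a b c e /=; ring. Qed.

Lemma ReQ n (M : 'M[R]_n) (z : 'rV[C]_n) :
  complex.Re ((z *m cplx_mx M *m adj z) 0 0) =
  bf M (map_mx (@complex.Re R) z) (map_mx (@complex.Re R) z) +
  bf M (map_mx (@complex.Im R) z) (map_mx (@complex.Im R) z).
Proof.
rewrite /bf !mxE Re_sum -big_split /=; apply: eq_bigr => j _.
rewrite /adj !mxE Re_mulconj Re_sum Im_sum; congr (_ * _ + _ * _).
- by apply: eq_bigr => i _; rewrite !mxE ReM_toC.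
- by apply: eq_bigr => i _; rewrite !mxE ImM_toC.
Qed.


Lemma sq_eq0C (c : C) : complex.Re c ^+ 2 + complex.Im c ^+ 2 = 0 -> c = 0.
Proof.
case: c => b1 b2 /= h.
have h1 : b1 = 0 by apply/eqP; rewrite -sqrf_eq0; apply/eqP; nra.
have h2 : b2 = 0 by apply/eqP; rewrite -sqrf_eq0; apply/eqP; nra.
by rewrite h1 h2.
Qed.

Lemma toC_bf n (M : 'M[R]_n) x : toC (bf M x x) = (rC x *m cplx_mx M *m adj (rC x)) 0 0.
Proof. by rewrite qC_rC [RHS]mxE. Qed.

Lemma psd_of_spec n (M : 'M[R]_n) P (dd : 'rV[R]_n) :
  cplx_mx M = hP P *m diag_mx (map_mx toC dd) *m P -> (forall j, 0 <= dd 0 j) ->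
  forall x, 0 <= bf M x x.
Proof.
move=> Me hd x; rewrite -ler0c toC_bf (spec_sum _ Me).
apply: sumr_ge0 => j _; apply: mulr_ge0; [by rewrite ler0c | exact: mul_conjC_ge0].
Qed.

Lemma lorentz_of_spec n (M : 'M[R]_n) P (dd : 'rV[R]_n) : M^T = M ->
  cplx_mx M = hP P *m diag_mx (map_mx toC dd) *m P ->
  (forall j1 j2, 0 < dd 0 j1 -> 0 < dd 0 j2 -> j1 = j2) ->
  forall u v, 0 < bf M u u -> bf M u u * bf M v v <= bf M u v ^+ 2.
Proof.
move=> Ms Me huniq u v qu.
have [j0 hj0|none] := pickP (fun j => 0 < dd 0 j); last first.
  exfalso; suff : bf M u u <= 0 by rewrite leNgt qu.
  rewrite -lecR rmorph0 toC_bf (spec_sum _ Me); apply: sumr_le0 => j _.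
  apply: mulr_le0_ge0; last exact: mul_conjC_ge0.
  by rewrite -(rmorph0 toC) lecR leNgt none.
pose l (z : 'rV[C]_n) := (z *m hP P) 0 j0.
have negZ : forall z, l z = 0 -> complex.Re ((z *m cplx_mx M *m adj z) 0 0) <= 0.
  move=> z lz.
  have : (z *m cplx_mx M *m adj z) 0 0 <= 0.
    rewrite (spec_sum _ Me); apply: sumr_le0 => j _.
    have [->|jn] := eqVneq j j0; first by rewrite -/(l z) lz mul0r mulr0.
    apply: mulr_le0_ge0; last exact: mul_conjC_ge0.
    rewrite -(rmorph0 toC) lecR leNgt; apply/negP => hj; case/eqP: jn; exact: huniq.
  by rewrite lecE => /andP[_].
have bne : l (rC u) != 0.
  apply/eqP => h; have := negZ _ h; rewrite -toC_bf /=.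
  by rewrite leNgt qu.
set a := l (rC v); set b := l (rC u).
pose z := a *: rC u - b *: rC v.
have lz : l z = 0.
  rewrite /l /z mulmxBl -!scalemxAl /a /b /l !mxE.
  by rewrite mulrC subrr.
have := negZ z lz; rewrite ReQ.
have eRe : map_mx (@complex.Re R) z = complex.Re a *: u + (- complex.Re b) *: v.
  apply/matrixP => i j; rewrite !mxE.
  by case: (a) => a1 a2; case: (b) => b1 b2 /=; ring.
have eIm : map_mx (@complex.Im R) z = complex.Im a *: u + (- complex.Im b) *: v.
  apply/matrixP => i j; rewrite !mxE.
  by case: (a) => a1 a2; case: (b) => b1 b2 /=; ring.
have b2 : 0 < complex.Re b ^+ 2 + complex.Im b ^+ 2.
  rewrite lt_def addr_ge0 ?sqr_ge0 // andbT; apply: contra bne.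
  by move/eqP/sq_eq0C/eqP.
rewrite eRe eIm !quad2 //.
move: b2 qu; set a1 := complex.Re a; set a2 := complex.Im a.
set b1 := complex.Re b; set b2 := complex.Im b.
set Qu := bf M u u; set Qv := bf M v v; set Quv := bf M u v.
move=> hb hqu hX.
rewrite leNgt; apply/negP => h.
have h1 : 0 < (Qu * Qv - Quv ^+ 2) * (b1 ^+ 2 + b2 ^+ 2) by apply: mulr_gt0 => //; lra.
have h3 : 0 <= (Qu * a1 - Quv * b1) ^+ 2 + (Qu * a2 - Quv * b2) ^+ 2 by rewrite addr_ge0 ?sqr_ge0.
have h4 : Qu * (a1 ^+ 2 * Qu + 2 * a1 * - b1 * Quv + (- b1) ^+ 2 * Qv +
   (a2 ^+ 2 * Qu + 2 * a2 * - b2 * Quv + (- b2) ^+ 2 * Qv)) <= 0.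
  exact: mulr_ge0_le0 (ltW hqu) hX.
have e : Qu * (a1 ^+ 2 * Qu + 2 * a1 * - b1 * Quv + (- b1) ^+ 2 * Qv +
   (a2 ^+ 2 * Qu + 2 * a2 * - b2 * Quv + (- b2) ^+ 2 * Qv)) =
   (Qu * a1 - Quv * b1) ^+ 2 + (Qu * a2 - Quv * b2) ^+ 2 + ((Qu * Qv - Quv ^+ 2) * (b1 ^+ 2 + b2 ^+ 2)).
  ring.
clear -h1 h3 h4 e; lra.
Qed.

End SP.


Section Main.
Variable R : realType.
Local Notation C := (R[i]).
Local Notation toC := (real_complex R).
Variable N : nat.
Hypothesis hN : (0 < N)%N.
Variable d : 'rV[R]_N.
Variable S : 'M[R]_N.
Hypothesis dpos : forall i, 0 < d 0 i.
Hypothesis Ssym : S^T = S.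
Hypothesis S0 : forall i j, 0 <= S i j.

Local Notation K := (diag_mx d *m S).
Definition H : 'M[R]_N := diag_mx (\row_i Num.sqrt (d 0 i)).
Definition E (eta : 'rV[R]_N) : 'M[R]_N := diag_mx (\row_i Num.sqrt (eta 0 i)).
Definition g (eta : 'rV[R]_N) : 'rV[R]_N := \row_i (Num.sqrt (eta 0 i) * Num.sqrt (d 0 i)).
Definition T (eta : 'rV[R]_N) : 'M[R]_N := diag_mx (g eta) *m S *m diag_mx (g eta).

Lemma H_unit : H \in unitmx.
Proof.
rewrite unitmxE det_diag unitfE; apply/prodf_neq0 => i _.
by rewrite mxE sqrtr_eq0 -ltNge dpos.
Qed.

Lemma HE eta : H *m E eta = E eta *m H.
Proof. exact: diag_mx_comm. Qed.

Lemma T_entry eta i j : T eta i j = g eta 0 i * S i j * g eta 0 j.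
Proof. by rewrite /T mul_mx_diag mul_diag_mx !mxE. Qed.

Lemma T_sym eta : (T eta)^T = T eta.
Proof.
apply/matrixP => i j; rewrite mxE !T_entry.
have -> : S j i = S i j by rewrite -[in RHS]Ssym mxE.
ring.
Qed.

Lemma g_ge0 eta i : 0 <= g eta 0 i.
Proof. by rewrite mxE mulr_ge0 ?sqrtr_ge0. Qed.

Lemma T_ge0 eta i j : 0 <= T eta i j.
Proof. by rewrite T_entry !mulr_ge0 ?g_ge0. Qed.

Lemma T_prod eta : T eta = E eta *m H *m S *m H *m E eta.
Proof.
have -> : E eta *m H = diag_mx (g eta).
  by rewrite /E /H mulmx_diag; congr diag_mx; apply/matrixP => i j; rewrite !mxE.
rewrite -[RHS]mulmxA /H /E mulmx_diag; congr (_ *m _ *m diag_mx _).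
by apply/matrixP => i j; rewrite !mxE mulrC.
Qed.

Lemma K_prod (eta : 'rV[R]_N) : (forall i, 0 <= eta 0 i) ->
  K *m diag_mx eta = H *m H *m S *m (E eta *m E eta).
Proof.
move=> e0; rewrite /H /E !mulmx_diag; congr (diag_mx _ *m _ *m diag_mx _).
  by apply/matrixP => i j; rewrite !mxE -expr2 sqr_sqrtr ?(ord1 i) // ltW.
by apply/matrixP => i j; rewrite !mxE -expr2 sqr_sqrtr ?(ord1 i).
Qed.


Lemma cmod_toC (x : R) : 0 <= x -> cmod (toC x) = x.
Proof. by move=> x0; rewrite /cmod /= expr0n addr0 sqrtr_sqr ger0_norm. Qed.

Lemma cmod_ge0 (z : C) : 0 <= cmod z.
Proof. exact: sqrtr_ge0. Qed.

Lemma Re_fun_eq (eta : 'rV[R]_N) : (forall i, 0 <= eta 0 i) ->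
  exists lam, [/\ Re_fun K eta = lam, 0 <= lam,
    (forall x : 'rV[R]_N, (x *m T eta *m x^T) 0 0 <= lam * (x *m x^T) 0 0) &
    (exists2 x : 'rV[R]_N, x != 0 & x *m T eta = lam *: x)].
Proof.
move=> e0.
have [lam [l0 R1 R2 R4]] := rayleigh hN (T_sym eta) (T_ge0 eta).
exists lam; split => //.
rewrite /Re_fun /spectral_radius.
set Ev := (X in sup X).
have cplxK : cplx_mx (K *m diag_mx eta) = cplx_mx H *m cplx_mx H *m cplx_mx S *m
    (cplx_mx (E eta) *m cplx_mx (E eta)) by rewrite K_prod // /cplx_mx !map_mxM.
have cplxT : cplx_mx (T eta) = cplx_mx (E eta) *m cplx_mx H *m cplx_mx S *m cplx_mx H *m
    cplx_mx (E eta) by rewrite T_prod /cplx_mx !map_mxM.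
have HCu : cplx_mx H \in unitmx by rewrite map_unitmx H_unit.
have HEC : cplx_mx H *m cplx_mx (E eta) = cplx_mx (E eta) *m cplx_mx H.
  by rewrite /cplx_mx -!map_mxM HE.
have ub : ubound Ev lam.
  move=> _ [z Hz <-]; rewrite /eigenvalues /= in Hz.
  have [->|z0] := eqVneq z 0.
    by rewrite -(rmorph0 toC) cmod_toC.
  apply: R4; rewrite -eigenvalue_root_char cplxT; apply: transfer1 => //.
  by rewrite -cplxK eigenvalue_root_char.
have inEv : exists2 r, Ev r & lam <= r.
  have [l00|lN0] := eqVneq lam 0.
    have [z Hz] := eigenvalue_closed (cplx_mx (K *m diag_mx eta)) hN.
    exists (cmod z); last by rewrite l00 cmod_ge0.
    by exists z => //; rewrite /eigenvalues /= -eigenvalue_root_char.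
  exists lam => //; exists (toC lam); last exact: cmod_toC.
  case: R2 => x x0 Hx.
  have : eigenvalue (cplx_mx (T eta)) (toC lam).
    apply/eigenvalueP; exists (map_mx toC x); last by rewrite map_mx_eq0.
    by rewrite /cplx_mx -map_mxM Hx map_mxZ.
  rewrite cplxT => /transfer2 -/(_ HCu HEC); rewrite -cplxK eigenvalue_root_char.
  by apply; rewrite -(rmorph0 toC) (inj_eq (@complexI R)).
apply/le_anti/andP; split.
  by apply: ge_sup => //; case: inEv => r Er _; exists r.
by case: inEv => r Er le; apply: le_trans le _; apply: ub_le_sup => //; exists lam.
Qed.


Definition M : 'M[R]_N := H *m S *m H.

Lemma H_sym : H^T = H.
Proof. exact: tr_diag_mx. Qed.

Lemma M_sym : M^T = M.
Proof. by rewrite /M !trmx_mul H_sym Ssym mulmxA. Qed.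

Lemma K_sim : K = H *m M *m invmx H.
Proof.
rewrite /M !mulmxA mulmxK ?H_unit //.
rewrite /H mulmx_diag; congr (diag_mx _ *m _).
by apply/matrixP => i j; rewrite !mxE -expr2 sqr_sqrtr ?(ord1 i) // ltW.
Qed.

Lemma char_KM : char_poly (cplx_mx K) = char_poly (cplx_mx M).
Proof.
rewrite K_sim /cplx_mx !map_mxM map_invmx char_poly_sim //.
by rewrite map_unitmx H_unit.
Qed.

Lemma bf_SM u v : bf S u v = bf M (u *m invmx H) (v *m invmx H).
Proof.
rewrite /bf /M trmx_mul trmx_inv H_sym !mulmxA mulmxKV ?H_unit //.
by rewrite mulmxK ?H_unit.
Qed.


Lemma spec_M_props : exists P (dd : 'rV[R]_N),
  [/\ P *m hP P = 1%:M, cplx_mx M = hP P *m diag_mx (map_mx toC dd) *m P &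
     char_poly (cplx_mx K) = \prod_(j < N) ('X - (toC (dd 0 j))%:P)].
Proof.
have [P [dd [PP Me]]] := spec_real M_sym; exists P, dd; split => //.
rewrite char_KM Me.
have PP' := mulmx1C PP.
have hPu : hP P \in unitmx by case: (mulmx1_unit PP').
have iv : invmx (hP P) = P.
  by rewrite -[invmx _]mulmx1 -PP' mulmxA mulVmx // mul1mx.
rewrite -{2}iv char_poly_sim // char_poly_trig ?diag_mx_is_trig //.
by apply: eq_bigr => j _; rewrite !mxE eqxx /= mulr1n.
Qed.

Lemma dd_root (dd : 'rV[R]_N) j :
  char_poly (cplx_mx K) = \prod_(j < N) ('X - (toC (dd 0 j))%:P) ->
  eigenvalues K (toC (dd 0 j)).
Proof.
move=> Hc; rewrite /eigenvalues /= Hc /root horner_prod (bigD1 j) //=.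
by rewrite hornerXsubC subrr mul0r.
Qed.

Lemma psd_S : (forall z, eigenvalues K z -> exists x : R, 0 <= x /\ z = toC x) ->
  forall v, 0 <= bf S v v.
Proof.
move=> hyp v; have [P [dd [PP Me Hc]]] := spec_M_props.
rewrite bf_SM; apply: (psd_of_spec Me) => j.
by have [x [x0 /complexI ->]] := hyp _ (dd_root j Hc).
Qed.

Lemma lor_S rho : alg_mult K (toC rho) = 1%N ->
  (forall z, eigenvalues K z -> z = toC rho \/ exists x : R, x <= 0 /\ z = toC x) ->
  forall u v, 0 < bf S u u -> bf S u u * bf S v v <= bf S u v ^+ 2.
Proof.
move=> hm hyp u v; have [P [dd [PP Me Hc]]] := spec_M_props.
rewrite !bf_SM; apply: (lorentz_of_spec M_sym Me).
have pos_rho j : 0 < dd 0 j -> dd 0 j = rho.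
  move=> pj; case: (hyp _ (dd_root j Hc)) => [/complexI //|[x [x0 /complexI e]]].
  by move: pj; rewrite e ltNge x0.
move=> j1 j2 p1 p2; case: (eqVneq j1 j2) => // neq; exfalso.
have : (2 <= alg_mult K (toC rho))%N.
  rewrite /alg_mult mup_geq ?monic_neq0 ?char_poly_monic // Hc.
  have n21 : j2 != j1 by rewrite eq_sym.
  rewrite (bigD1 j1) // (bigD1 j2) ?n21 //.
  rewrite expr2; apply: dvdp_mul; first by rewrite pos_rho.
  by apply: dvdp_mulr; rewrite pos_rho.
by rewrite hm.
Qed.


Lemma quadT eta (x : 'rV[R]_N) :
  (x *m T eta *m x^T) 0 0 = bf S (x *m diag_mx (g eta)) (x *m diag_mx (g eta)).
Proof. by rewrite /bf /T trmx_mul tr_diag_mx !mulmxA. Qed.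

Lemma g_sq (eta : 'rV[R]_N) i : 0 <= eta 0 i -> g eta 0 i ^+ 2 = eta 0 i * d 0 i.
Proof. by move=> e0; rewrite mxE exprMn !sqr_sqrtr // ltW. Qed.

Definition Dg (eta : 'rV[R]_N) : 'M[R]_N := diag_mx (\row_i (eta 0 i * d 0 i)).

Lemma GG (eta : 'rV[R]_N) : (forall i, 0 <= eta 0 i) ->
  diag_mx (g eta) *m diag_mx (g eta) = Dg eta.
Proof.
move=> e0; rewrite mulmx_diag /Dg; congr diag_mx; apply/matrixP => i j.
by rewrite !mxE -g_sq // expr2 mxE.
Qed.

Lemma nrm_ge0 (x : 'rV[R]_N) : 0 <= (x *m x^T) 0 0.
Proof. by rewrite mxE; apply: sumr_ge0 => i _; rewrite !mxE -expr2 sqr_ge0. Qed.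

Lemma nrm_pos (x : 'rV[R]_N) : x != 0 -> 0 < (x *m x^T) 0 0.
Proof.
move=> x0; rewrite lt_def nrm_ge0 andbT; apply: contra x0; rewrite mxE => /eqP Hs.
have pos : forall i : 'I_N, true -> 0 <= x 0 i * x^T i 0.
  by move=> i _; rewrite !mxE -expr2 sqr_ge0.
have H0 := psumr_eq0P pos Hs.
apply/eqP/matrixP => i j; rewrite (ord1 i) mxE.
by have /eqP := H0 j isT; rewrite !mxE mulf_eq0 orbb => /eqP.
Qed.

Lemma nrm_sum (x : 'rV[R]_N) : (x *m x^T) 0 0 = \sum_i x 0 i ^+ 2.
Proof. by rewrite mxE; apply: eq_bigr => i _; rewrite mxE expr2. Qed.

Lemma eig_quad eta (x : 'rV[R]_N) f : x *m T eta = f *: x ->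
  (x *m T eta *m x^T) 0 0 = f * (x *m x^T) 0 0.
Proof. by move=> Hx; rewrite Hx -scalemxAl mxE. Qed.

Lemma cube_comb (e1 e2 : 'rV[R]_N) t : in_unit_cube e1 -> in_unit_cube e2 -> 0 <= t <= 1 ->
  forall i, 0 <= (t *: e1 + (1 - t) *: e2) 0 i.
Proof.
move=> c1 c2 /andP[t0 t1] i; rewrite !mxE.
case/andP: (c1 i) => a0 _; case/andP: (c2 i) => b0 _.
by apply: addr_ge0; apply: mulr_ge0 => //; lra.
Qed.

Lemma cube_ge0 (e : 'rV[R]_N) : in_unit_cube e -> forall i, 0 <= e 0 i.
Proof. by move=> c i; case/andP: (c i). Qed.


Lemma convex_part : (forall v, 0 <= bf S v v) -> convex_on_cube (Re_fun K).
Proof.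
move=> psd e1 e2 t c1 c2 ht.
have e0 := cube_comb c1 c2 ht.
case/andP: ht => t0 t1.
have [f [-> f0 _ [x x0 Hx]]] := Re_fun_eq e0.
have [f1 [-> f10 R11 _]] := Re_fun_eq (cube_ge0 c1).
have [f2 [-> f20 R12 _]] := Re_fun_eq (cube_ge0 c2).
move: e0 Hx; set eta := t *: e1 + (1 - t) *: e2 => e0 Hx.
have [fz|fpos] := eqVneq f 0.
  rewrite fz; apply: addr_ge0; apply: mulr_ge0 => //; lra.
have fp : 0 < f by rewrite lt_def fpos.
pose G := diag_mx (g eta).
pose y := x *m G. pose c := y *m S.
have nx := nrm_pos x0.
pose p := bf S y y.
have ep : p = f * (x *m x^T) 0 0 by rewrite /p /y /G -quadT (eig_quad Hx).
have pp : 0 < p by rewrite ep mulr_gt0.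
have cG : c *m G = f *: x by rewrite /c /y -Hx /T !mulmxA.
pose L e := (c *m Dg e *m c^T) 0 0 / p.
have LA : L eta = f.
  rewrite /L -GG // !mulmxA.
  have -> : c *m diag_mx (g eta) *m diag_mx (g eta) *m c^T = (c *m G) *m (c *m G)^T.
    by rewrite /G [(c *m _)^T]trmx_mul tr_diag_mx !mulmxA.
  rewrite cG -scalemxAl linearZ /= -scalemxAr scalerA [X in X / _]mxE ep.
  have nn : f * (x *m x^T) 0 0 != 0 by rewrite -ep lt0r_neq0.
  move: nn; set n := (x *m x^T) 0 0 => nn.
  by rewrite -mulrA mulfK.
have LB : forall (e : 'rV[R]_N) (f' : R), (forall i, 0 <= e 0 i) -> 0 <= f' ->
    (forall z : 'rV[R]_N, (z *m T e *m z^T) 0 0 <= f' * (z *m z^T) 0 0) -> L e <= f'.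
  move=> e f' ep0 f'0 R1'.
  pose G' := diag_mx (g e). pose z := c *m G'. pose w := z *m G'.
  pose Q := (c *m Dg e *m c^T) 0 0.
  have eQ : Q = (z *m z^T) 0 0 by rewrite /Q -GG // /z /G' [(c *m _)^T]trmx_mul tr_diag_mx !mulmxA.
  have Q0 : 0 <= Q by rewrite eQ nrm_ge0.
  have ew : bf S y w = Q.
    by rewrite /bf /w /z /Q /c -GG // !trmx_mul !tr_diag_mx !mulmxA.
  have e2' : bf S w w <= f' * Q by rewrite eQ /w -quadT R1'.
  have cs := cs_psd y w Ssym psd; rewrite ew in cs.
  have h : Q ^+ 2 <= p * (f' * Q).
    apply: le_trans cs _; rewrite ler_wpM2l // ltW //.
  rewrite /L -/Q; have [->|Qn] := eqVneq Q 0; first by rewrite mul0r.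
  have Qp : 0 < Q by rewrite lt_def Qn.
  rewrite ler_pdivrMr //; nra.
have LC : L eta = t * L e1 + (1 - t) * L e2.
  rewrite /L; have -> : Dg eta = t *: Dg e1 + (1 - t) *: Dg e2.
    by apply/matrixP => i j; rewrite !mxE; case: eqP => _; rewrite ?mulr1n ?mulr0n; ring.
  rewrite mulmxDr mulmxDl -!scalemxAr -!scalemxAl.
  set A := (c *m Dg e1 *m c^T); set B := (c *m Dg e2 *m c^T).
  by rewrite [X in X / p]mxE [(t *: A) 0 0]mxE [((1 - t) *: B) 0 0]mxE mulrDl !mulrA.
rewrite -LA LC; apply: lerD; apply: ler_wpM2l; try lra; apply: LB => //.
- exact: cube_ge0.
- exact: cube_ge0.
Qed.


Lemma norm_eig (e : 'rV[R]_N) (f : R) (x : 'rV[R]_N) : 0 <= f -> x != 0 ->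
  x *m T e = f *: x -> exists x' : 'rV[R]_N, x' *m T e = f *: x' /\ (x' *m x'^T) 0 0 = f.
Proof.
move=> f0 x0 Hx; have nx := nrm_pos x0.
move: nx; set n := (x *m x^T) 0 0 => nx.
exists (Num.sqrt (f / n) *: x); split.
  by rewrite -scalemxAl Hx !scalerA mulrC.
rewrite linearZ /= -scalemxAl -scalemxAr scalerA mxE -/n -expr2 sqr_sqrtr ?divfK //.
  by rewrite lt0r_neq0.
by rewrite divr_ge0 // ltW.
Qed.

Lemma concave_part :
  (forall u v, 0 < bf S u u -> bf S u u * bf S v v <= bf S u v ^+ 2) ->
  concave_on_cube (Re_fun K).
Proof.
move=> lor e1 e2 t c1 c2 ht.
have e0 := cube_comb c1 c2 ht.
case/andP: ht => t0 t1.
have [f [-> f0 R1 _]] := Re_fun_eq e0.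
have p1 := cube_ge0 c1; have p2 := cube_ge0 c2.
have [f1 [-> f10 _ [x1 x10 H1]]] := Re_fun_eq p1.
have [f2 [-> f20 _ [x2 x20 H2]]] := Re_fun_eq p2.
move: e0 R1; set eta := t *: e1 + (1 - t) *: e2 => e0 R1.
have [u1 [Hu1 Nu1]] := norm_eig f10 x10 H1.
have [u2 [Hu2 Nu2]] := norm_eig f20 x20 H2.
pose y1 := u1 *m diag_mx (g e1).
have q1 : bf S y1 y1 = f1 ^+ 2 by rewrite /y1 -quadT (eig_quad Hu1) Nu1 expr2.
have [v2 [Hv2 Nv2 B0]] : exists v2 : 'rV[R]_N, [/\ v2 *m T e2 = f2 *: v2,
    (v2 *m v2^T) 0 0 = f2 & 0 <= bf S y1 (v2 *m diag_mx (g e2))].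
  case: (leP 0 (bf S y1 (u2 *m diag_mx (g e2)))) => h; first by exists u2.
  exists (- u2); split.
  - by rewrite mulNmx Hu2 scalerN.
  - by rewrite linearN /= mulNmx mulmxN opprK.
  - rewrite mulNmx /bf linearN /= mulmxN mxE; move: h; rewrite /bf => h.
    by rewrite oppr_ge0 ltW.
pose y2 := v2 *m diag_mx (g e2).
have q2 : bf S y2 y2 = f2 ^+ 2 by rewrite /y2 -quadT (eig_quad Hv2) Nv2 expr2.
move: B0; rewrite -/y2; set beta := bf S y1 y2 => B0.
have hb : f1 * f2 <= beta.
  have [f1z|f1n] := eqVneq f1 0; first by rewrite f1z mul0r.
  have f1p : 0 < f1 ^+ 2 by rewrite exprn_gt0 // lt_def f1n.
  have := lor y1 y2; rewrite q1 q2 -/beta => /(_ f1p) h.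
  have ff : 0 <= f1 * f2 by rewrite mulr_ge0.
  rewrite -exprMn in h; nra.
pose y := t *: y1 + (1 - t) *: y2.
have qy : bf S y y = t ^+ 2 * f1 ^+ 2 + 2 * t * (1 - t) * beta + (1 - t) ^+ 2 * f2 ^+ 2.
  by rewrite /y quad2 // q1 q2.
pose x : 'rV[R]_N := \row_i (y 0 i / g eta 0 i).
have yi : forall i, y 0 i = t * (u1 0 i * g e1 0 i) + (1 - t) * (v2 0 i * g e2 0 i).
  by move=> i; rewrite /y /y1 /y2 !mul_mx_diag !mxE.
have gi : forall i, g eta 0 i ^+ 2 = t * g e1 0 i ^+ 2 + (1 - t) * g e2 0 i ^+ 2.
  move=> i; rewrite (g_sq (e0 i)) (g_sq (p1 i)) (g_sq (p2 i)) /eta !mxE; ring.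
have xG : x *m diag_mx (g eta) = y.
  apply/matrixP => i j; rewrite (ord1 i) mul_mx_diag [LHS]mxE /x [X in X * _]mxE.
  have [gz|gn] := eqVneq (g eta 0 j) 0; last by rewrite divfK.
  rewrite gz mulr0 yi; apply/esym.
  exact: (@crd0 R t (u1 0 j) (v2 0 j) (g e1 0 j) (g e2 0 j) (g eta 0 j) t0 t1 (g_ge0 e1 j) (g_ge0 e2 j) (gi j) gz).
have nxle : (x *m x^T) 0 0 <= t * f1 + (1 - t) * f2.
  have xi : forall i, x 0 i = y 0 i / g eta 0 i by move=> i; rewrite mxE.
  rewrite -Nu1 -Nv2 !nrm_sum !mulr_sumr -big_split; apply: ler_sum => i _.
  by rewrite xi yi; apply: crd1 => //; exact: g_ge0.
have key : bf S y y <= f * (t * f1 + (1 - t) * f2).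
  rewrite -xG -quadT; apply: le_trans (R1 x) _; exact: ler_wpM2l.
have s0 : 0 <= t * f1 + (1 - t) * f2.
  by apply: addr_ge0; apply: mulr_ge0 => //; lra.
have t10 : 0 <= t * (1 - t) by apply: mulr_ge0 => //; lra.
move: qy key s0 hb t10; set s := t * f1 + (1 - t) * f2 => qy key s0 hb t10.
have ss : s ^+ 2 <= bf S y y.
  rewrite qy /s.
  have : 2 * t * (1 - t) * (f1 * f2) <= 2 * t * (1 - t) * beta.
    by rewrite -!mulrA ler_wpM2l // ler_wpM2l // ler_wpM2l // ?subr_ge0 //; lra.
  move=> h; nra.
clear -ss key s0 f0.
nra.
Qed.

End Main.

Theorem theorem4p1 (R : realType) (N : nat) (hN : (1 <= N)%N) (K : 'M[R]_N) :
  (forall i j, 0 <= K i j) ->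
  diag_symmetrizable K ->
  ((forall z, eigenvalues K z -> exists x : R, 0 <= x /\ z = x%:C%C) ->
     convex_on_cube (Re_fun K)) /\
  (alg_mult K (spectral_radius K)%:C%C = 1%N ->
   (forall z, eigenvalues K z ->
      z = (spectral_radius K)%:C%C \/ exists x : R, x <= 0 /\ z = x%:C%C) ->
     concave_on_cube (Re_fun K)).
Proof.
move=> K0 [d [S [dpos [Ssym eK]]]]; subst K.
have S0 : forall i j, 0 <= S i j.
  move=> i j; have := K0 i j; rewrite mul_diag_mx mxE.
  by rewrite pmulr_rge0.
split => [hyp | hm hyp].
  by apply: (convex_part hN dpos Ssym S0); exact: (psd_S dpos Ssym).
by apply: (concave_part hN dpos Ssym S0); exact: (lor_S dpos Ssym hm).
Qed.
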